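(* Let $s\in\mathbb{C}$ with $\sigma=\operatorname{Re}s>1$, let $\beta\ne0$ be complex and $n_0>1+|\beta|$ an integer. With $\gamma_{k_0}=\big|1+\frac{s-1}{k_0+1}\big|$, let $k_0$ be a positive integer such that $\gamma_{k_0}<\frac{n_0-1}{|\beta|}$. Let $\mathcal{D}_{n_0}\in\{\mathcal{X}_{n_0},\mathcal{Y}_{n_0},\mathcal{Z}_{n_0}\}$. Then $$\Big|\sum_{k\ge k_0}\binom{-s}{k}\beta^k\mathcal{D}_{n_0}(s+k)\Big|\le\frac{2|\beta|^{k_0}(n_0-1)^{3-\sigma-k_0}}{(\sigma+k_0-2)(n_0-1-\gamma_{k_0}|\beta|)}\Big|\binom{-s}{k_0}\Big|.$$
   Context: Pascal's rhombus consists of integers $r_{i,j}$ for $i\ge0$, $j\in\mathbb{Z}$, with $r_{0,j}=0$ for all $j$, $r_{1,0}=1$, $r_{1,j}=0$ for $j\ne0$, and $r_{i,j}=r_{i-1,j-1}+r_{i-1,j}+r_{i-1,j+1}+r_{i-2,j}$ for $i\ge2$. For $n\ge1$: $x(n)$ is the number of $j$ with $r_{n,j}$ odd; $y(n)$ the number of $j$ with $r_{2n-1,2j}$ odd; $z(n)$ the number of $j$ with $r_{2n,2j-1}$ odd. $\mathcal{X}_{n_0}(s)=\sum_{n\ge n_0}x(n)n^{-s}$, $\mathcal{Y}_{n_0}(s)=\sum_{n\ge n_0}y(n)n^{-s}$, $\mathcal{Z}_{n_0}(s)=\sum_{n\ge n_0}z(n)n^{-s}$. *)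

(* Defs.v *)
From Stdlib Require Import Reals ZArith List Lia.
From Coquelicot Require Import Coquelicot.
Open Scope R_scope.

(* Pascal's rhombus: rr i = (r_i, r_{i+1}) as functions of j : Z. *)
Fixpoint rr (i : nat) : (Z -> Z) * (Z -> Z) :=
  match i with
  | O => (fun _ => 0%Z, fun j => if Z.eqb j 0 then 1%Z else 0%Z)
  | S i' => let (a, b) := rr i' in
            (b, fun j => (b (j - 1) + b j + b (j + 1) + a j)%Z)
  end.

Definition r (i : nat) (j : Z) : Z := fst (rr i) j.

Definition zrange (N : nat) : list Z :=
  map (fun k => (Z.of_nat k - Z.of_nat N)%Z) (seq 0 (2 * N + 1)).

Definition count_odd (f : Z -> Z) (N : nat) : nat :=
  length (filter (fun j => Z.odd (f j)) (zrange N)).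

(* r_{i,j} = 0 for |j| >= i (proved below), so the windows used here
   contain all j with a nonzero (hence all with an odd) entry. *)
Definition x (n : nat) : nat := count_odd (fun j => r n j) n.
Definition y (n : nat) : nat := count_odd (fun j => r (2 * n - 1) (2 * j)%Z) (2 * n).
Definition z (n : nat) : nat := count_odd (fun j => r (2 * n) (2 * j - 1)%Z) (2 * n).

Lemma rr_support (i : nat) :
  (forall j, (Z.of_nat i <= Z.abs j)%Z -> fst (rr i) j = 0%Z) /\
  (forall j, (Z.of_nat i + 1 <= Z.abs j)%Z -> snd (rr i) j = 0%Z).
Proof.
  induction i as [|i [IH1 IH2]]; simpl.
  - split; [reflexivity|]. intros j Hj. destruct (Z.eqb_spec j 0); lia.
  - destruct (rr i) as [a b] eqn:E; simpl in *. split.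
    + intros j Hj. apply IH2. lia.
    + intros j Hj. rewrite IH2 by lia. rewrite IH2 by lia. rewrite IH2 by lia.
      rewrite IH1 by lia. reflexivity.
Qed.

Lemma r_support (i : nat) (j : Z) : (Z.of_nat i <= Z.abs j)%Z -> r i j = 0%Z.
Proof. apply (proj1 (rr_support i)). Qed.

Definition Cre (c : C) : R := fst c.
Definition Cim (c : C) : R := snd c.

Fixpoint Cpow_nat (c : C) (k : nat) : C :=
  match k with O => RtoC 1 | S k' => Cmult (Cpow_nat c k') c end.

(* n^{-s} = exp(-s ln n) for a positive integer n *)
Definition npow_neg (n : nat) (s : C) : C :=
  (exp (- Cre s * ln (INR n)) * cos (Cim s * ln (INR n)),
   - (exp (- Cre s * ln (INR n)) * sin (Cim s * ln (INR n)))).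

(* generalized binomial coefficient binom(w, k) = w(w-1)...(w-k+1)/k! *)
Fixpoint cbinom (w : C) (k : nat) : C :=
  match k with
  | O => RtoC 1
  | S k' => Cdiv (Cmult (cbinom w k') (Cminus w (RtoC (INR k')))) (RtoC (INR k))
  end.

(* The Dirichlet series D_{n0}(s) = sum_{n >= n0} a(n) n^{-s},
   its value taken componentwise with Coquelicot's Series
   (equal to the sum whenever the series converges). *)
Definition dir_term (a : nat -> nat) (n0 : nat) (s : C) (n : nat) : C :=
  Cmult (RtoC (INR (a (n + n0)%nat))) (npow_neg (n + n0)%nat s).

Definition dirichlet (a : nat -> nat) (n0 : nat) (s : C) : C :=
  (Series (fun n => Cre (dir_term a n0 s n)), Series (fun n => Cim (dir_term a n0 s n))).

Definition gamma (s : C) (k0 : nat) : R :=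
  Cmod (Cplus (RtoC 1) (Cdiv (Cminus s (RtoC 1)) (RtoC (INR (k0 + 1))))).

(* Main.v *)
Require Import Defs.
From Stdlib Require Import Reals Lra Lia ZArith List FinFun.
From Coquelicot Require Import Coquelicot.
Open Scope R_scope.

Lemma sum_n_fst (a : nat -> C) N : fst (sum_n a N) = sum_n (fun n => fst (a n)) N.
Proof.
  induction N. - now rewrite !sum_O.
  - rewrite !sum_Sn. simpl. rewrite <- IHN. reflexivity.
Qed.
Lemma sum_n_snd (a : nat -> C) N : snd (sum_n a N) = sum_n (fun n => snd (a n)) N.
Proof.
  induction N. - now rewrite !sum_O.
  - rewrite !sum_Sn. simpl. rewrite <- IHN. reflexivity.
Qed.

Lemma filterlim_C_fst (l : C) : filterlim (fun z : C => fst z) (locally l) (locally (fst l)).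
Proof.
  intros P [eps HP]. exists eps. intros y [Hy _]. apply HP. exact Hy.
Qed.
Lemma filterlim_C_snd (l : C) : filterlim (fun z : C => snd z) (locally l) (locally (snd l)).
Proof.
  intros P [eps HP]. exists eps. intros y [_ Hy]. apply HP. exact Hy.
Qed.

Lemma cseries_bound (a : nat -> C) (b : nat -> R) (B : R) :
  (forall n, Cmod (a n) <= b n) -> (forall N, sum_n b N <= B) ->
  exists l, is_series a l /\ Cmod l <= B /\
    l = (Series (fun n => fst (a n)), Series (fun n => snd (a n))).
Proof.
  intros Hab HB.
  assert (Hb0 : forall n, 0 <= b n).
  { intros n. eapply Rle_trans; [apply Cmod_ge_0|apply Hab]. }
  assert (Exb : ex_series b).
  { destruct (ex_finite_lim_seq_incr (sum_n b) B) as [L HL].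
    - intros n. rewrite sum_Sn. simpl. unfold plus; simpl. specialize (Hb0 (S n)). lra.
    - exact HB.
    - exists L. exact HL. }
  assert (Exa : ex_series a).
  { apply (@ex_series_le C_AbsRing C_CompleteNormedModule a b); [|exact Exb].
    intros n. exact (Hab n). }
  destruct Exa as [l Hl]. exists l. split; [exact Hl|]. split.
  - assert (H1 : is_lim_seq (fun N => norm (sum_n a N)) (norm l)).
    { unfold is_lim_seq. eapply filterlim_comp; [exact Hl|]. apply filterlim_norm. }
    assert (H2 := is_lim_seq_const B).
    cut (Rbar_le (norm l) B); [intro H3; exact H3|].
    refine (is_lim_seq_le _ _ _ _ _ H1 H2).
    intros N. eapply Rle_trans; [apply (norm_sum_n_m a 0 N)|].
    eapply Rle_trans; [|apply (HB N)].
    apply sum_n_m_le. intros n. exact (Hab n).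
  - apply injective_projections; simpl; symmetry; apply is_series_unique.
    + unfold is_series. eapply filterlim_ext. { intros N. apply sum_n_fst. }
      eapply filterlim_comp; [exact Hl|]. apply filterlim_C_fst.
    + unfold is_series. eapply filterlim_ext. { intros N. apply sum_n_snd. }
      eapply filterlim_comp; [exact Hl|]. apply filterlim_C_snd.
Qed.

Lemma count_odd_bound (f : Z -> Z) (N : nat) (lo hi : Z) :
  (forall j, Z.odd (f j) = true -> (lo <= j <= hi)%Z) ->
  (count_odd f N <= Z.to_nat (hi - lo + 1))%nat.
Proof.
  intros Hf. unfold count_odd.
  replace (Z.to_nat (hi - lo + 1)) with
    (length (map (fun k => (lo + Z.of_nat k)%Z) (seq 0 (Z.to_nat (hi - lo + 1)))))
    by (rewrite length_map, length_seq; reflexivity).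
  apply NoDup_incl_length.
  - apply NoDup_filter. unfold zrange. apply FinFun.Injective_map_NoDup.
    + intros u v H. lia.
    + apply seq_NoDup.
  - intros j Hj. apply filter_In in Hj. destruct Hj as [_ Hj].
    specialize (Hf j Hj). apply in_map_iff. exists (Z.to_nat (j - lo)).
    split; [lia|]. apply in_seq. lia.
Qed.

Lemma odd_nz (v : Z) : Z.odd v = true -> v <> 0%Z.
Proof. intros H E. subst. discriminate. Qed.

Lemma r_odd (i : nat) (j : Z) : Z.odd (r i j) = true -> (Z.abs j < Z.of_nat i)%Z.
Proof.
  intros H. destruct (Z_lt_le_dec (Z.abs j) (Z.of_nat i)) as [h|h]; auto.
  exfalso. apply (odd_nz _ H). apply r_support. exact h.
Qed.

Lemma D_bound (D : nat -> nat) (n : nat) : (D = x \/ D = y \/ D = z) -> (1 <= n)%nat ->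
  (D n <= 2 * n)%nat.
Proof.
  intros HD Hn. destruct HD as [ -> | [ -> | -> ] ].
  - unfold x. eapply Nat.le_trans.
    + apply (count_odd_bound _ _ (- (Z.of_nat n - 1)) (Z.of_nat n - 1)).
      intros j Hj. apply r_odd in Hj. lia.
    + lia.
  - unfold y. eapply Nat.le_trans.
    + apply (count_odd_bound _ _ (- (Z.of_nat n - 1)) (Z.of_nat n - 1)).
      intros j Hj. apply r_odd in Hj. lia.
    + lia.
  - unfold z. eapply Nat.le_trans.
    + apply (count_odd_bound _ _ (- (Z.of_nat n - 1)) (Z.of_nat n)).
      intros j Hj. apply r_odd in Hj. lia.
    + lia.
Qed.

Lemma gamma_eq (s : C) (m : nat) :
  gamma s m = sqrt ((1 + (Cre s - 1) / (INR m + 1)) ^ 2 + (Cim s / (INR m + 1)) ^ 2).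
Proof.
  unfold gamma, Cmod. rewrite plus_INR. simpl (INR 1).
  assert (0 < INR m + 1) by (pose proof (pos_INR m); lra).
  f_equal. unfold Cre, Cim. simpl. field. lra.
Qed.

Lemma gamma_S (s : C) (m : nat) : 1 < Cre s -> gamma s (S m) <= gamma s m.
Proof.
  intros Hs. rewrite !gamma_eq, S_INR. apply sqrt_le_1_alt.
  pose proof (pos_INR m).
  set (u := INR m + 1). assert (Hu : 1 <= u) by (unfold u; lra).
  assert (A : 0 <= (Cre s - 1) / (u + 1) <= (Cre s - 1) / u).
  { split. apply Rdiv_le_0_compat; lra.
    unfold Rdiv. apply Rmult_le_compat_l; [lra|]. apply Rinv_le_contravar; lra. }
  assert (B : (Cim s / (u+1))^2 <= (Cim s / u)^2).
  { unfold Rdiv. rewrite !Rpow_mult_distr. apply Rmult_le_compat_l. apply pow2_ge_0.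
    apply pow_incr. split. left; apply Rinv_0_lt_compat; lra.
    apply Rinv_le_contravar; lra. }
  assert (C0 : (1 + (Cre s - 1) / (u + 1)) ^ 2 <= (1 + (Cre s - 1) / u) ^ 2).
  { apply pow_incr. lra. }
  replace (INR m + 1 + 1) with (u + 1) by (unfold u; ring). lra.
Qed.

Lemma gamma_ge0 s m : 0 <= gamma s m.
Proof. apply Cmod_ge_0. Qed.

Lemma gamma_mono (s : C) (k0 k : nat) : 1 < Cre s -> gamma s (k + k0) <= gamma s k0.
Proof.
  intros Hs. induction k. simpl; lra.
  simpl. eapply Rle_trans; [apply gamma_S; auto|exact IHk].
Qed.

Lemma cbinom_step (w : C) (m : nat) :
  Cmod (cbinom w (S m)) = Cmod (cbinom w m) * Cmod (Cminus w (RtoC (INR m))) / INR (S m).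
Proof.
  change (cbinom w (S m)) with (Cdiv (Cmult (cbinom w m) (Cminus w (RtoC (INR m)))) (RtoC (INR (S m)))).
  rewrite Cmod_div, Cmod_mult, Cmod_R, Rabs_pos_eq.
  reflexivity. apply pos_INR.
  intro E. apply (f_equal fst) in E. pose proof (pos_INR m). pose proof (S_INR m).
  change (INR (S m) = 0) in E. lra.
Qed.

Lemma gamma_binom (s : C) (m : nat) :
  Cmod (Cminus (Copp s) (RtoC (INR m))) / INR (S m) = gamma s m.
Proof.
  rewrite gamma_eq, S_INR. pose proof (pos_INR m).
  unfold Cmod. rewrite <- (sqrt_pow2 (INR m + 1)) at 1 by lra.
  rewrite <- sqrt_div_alt by (apply pow_lt; lra). f_equal.
  unfold Cre, Cim. simpl. field. lra.
Qed.

Lemma binom_bound (s : C) (k0 k : nat) : 1 < Cre s ->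
  Cmod (cbinom (Copp s) (k + k0)) <= Cmod (cbinom (Copp s) k0) * gamma s k0 ^ k.
Proof.
  intros Hs. induction k. simpl; lra.
  change (S k + k0)%nat with (S (k + k0)). rewrite cbinom_step. unfold Rdiv. rewrite Rmult_assoc.
  fold (Rdiv (Cmod (Cminus (Copp s) (RtoC (INR (k + k0))))) (INR (S (k + k0)))).
  rewrite gamma_binom. simpl pow.
  replace (Cmod (cbinom (Copp s) k0) * (gamma s k0 * gamma s k0 ^ k)) with
    (Cmod (cbinom (Copp s) k0) * gamma s k0 ^ k * gamma s k0) by ring.
  apply Rmult_le_compat; auto using Cmod_ge_0, gamma_ge0, gamma_mono.
Qed.

Lemma Cpow_mod (b : C) (k : nat) : Cmod (Cpow_nat b k) = Cmod b ^ k.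
Proof.
  induction k; simpl. apply Cmod_1. rewrite Cmod_mult, IHk. ring.
Qed.

Lemma Cmod_npow (m : nat) (w : C) : Cmod (npow_neg m w) = exp (- Cre w * ln (INR m)).
Proof.
  unfold npow_neg, Cmod. simpl fst; simpl snd.
  set (E := exp (- Cre w * ln (INR m))). set (t := Cim w * ln (INR m)).
  replace ((E * cos t) ^ 2 + (- (E * sin t)) ^ 2) with (E ^ 2 * (Rsqr (sin t) + Rsqr (cos t))) by (unfold Rsqr; ring).
  rewrite sin2_cos2, Rmult_1_r. apply sqrt_pow2. left; apply exp_pos.
Qed.

Lemma ln_ineq (y : R) : 0 < y -> ln y <= y - 1.
Proof.
  intros Hy. pose proof (exp_ineq1_le (ln y)). rewrite exp_ln in H by lra. lra.
Qed.

Lemma tele_est (a m : R) : 2 < a -> 2 <= m ->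
  exp ((1 - a) * ln m) <= (exp ((2 - a) * ln (m - 1)) - exp ((2 - a) * ln m)) / (a - 2).
Proof.
  intros Ha Hm.
  set (E := exp ((2 - a) * ln m)).
  assert (HE : 0 < E) by apply exp_pos.
  assert (H1 : exp ((1 - a) * ln m) = E / m).
  { unfold E. replace ((1 - a) * ln m) with ((2 - a) * ln m + - ln m) by ring.
    rewrite exp_plus, exp_Ropp, exp_ln by lra. reflexivity. }
  set (L := ln m - ln (m - 1)).
  assert (HL : 1 / m <= L).
  { unfold L. replace (m - 1) with (m * ((m - 1) / m)) by (field; lra).
    rewrite ln_mult by (try apply Rdiv_lt_0_compat; lra).
    pose proof (ln_ineq ((m - 1) / m)) as Hl.
    assert (((m - 1) / m) - 1 = - (1 / m)) by (field; lra).
    assert (0 < (m - 1) / m) by (apply Rdiv_lt_0_compat; lra). specialize (Hl H0). lra. }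
  assert (H2 : exp ((2 - a) * ln (m - 1)) = E * exp ((a - 2) * L)).
  { unfold E, L. rewrite <- exp_plus. f_equal. ring. }
  assert (H3 : 1 + (a - 2) * L <= exp ((a - 2) * L)) by apply exp_ineq1_le.
  rewrite H1, H2. apply (Rmult_le_reg_r (a - 2)); [lra|].
  unfold Rdiv at 2. rewrite Rmult_assoc, Rinv_l, Rmult_1_r by lra.
  assert (E * (1 + (a - 2) * L) <= E * exp ((a - 2) * L)) by (apply Rmult_le_compat_l; lra).
  assert ((a - 2) * (1 / m) <= (a - 2) * L) by (apply Rmult_le_compat_l; lra).
  assert (E * ((a - 2) * (1 / m)) <= E * ((a - 2) * L)) by (apply Rmult_le_compat_l; lra).
  replace (E / m * (a - 2)) with (E * ((a - 2) * (1 / m))) by (field; lra). nra.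
Qed.

Lemma sum_tele (g : nat -> R) (c : R) N :
  sum_n (fun n => c * (g n - g (S n))) N = c * (g O - g (S N)).
Proof.
  induction N. rewrite sum_O. reflexivity.
  rewrite sum_Sn, IHN. unfold plus; simpl. ring.
Qed.

Lemma dir_bound (D : nat -> nat) (n0 : nat) (w : C) :
  (D = x \/ D = y \/ D = z) -> (2 <= n0)%nat -> 2 < Cre w ->
  Cmod (dirichlet D n0 w) <= 2 * exp ((2 - Cre w) * ln (INR n0 - 1)) / (Cre w - 2).
Proof.
  intros HD Hn0 Ha. set (a := Cre w). assert (Ha' : 2 < a) by exact Ha.
  set (g := fun n => exp ((2 - a) * ln (INR (n + n0) - 1))).
  destruct (cseries_bound (dir_term D n0 w) (fun n => (2 / (a - 2)) * (g n - g (S n)))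
             (2 * g O / (a - 2))) as [l [_ [Hl Heq]]].
  - intros n. unfold dir_term. rewrite Cmod_mult, Cmod_R, Cmod_npow, Rabs_pos_eq by apply pos_INR.
    fold a. assert (Hm : (2 <= n + n0)%nat) by lia.
    apply le_INR in Hm. simpl in Hm.
    set (m := INR (n + n0)) in *.
    assert (HDm : INR (D (n + n0)%nat) <= 2 * m).
    { unfold m. replace 2 with (INR 2) by reflexivity. rewrite <- mult_INR. apply le_INR.
      apply D_bound; auto. lia. }
    assert (E1 : exp (- a * ln m) * m = exp ((1 - a) * ln m)).
    { replace ((1 - a) * ln m) with (- a * ln m + ln m) by ring. rewrite exp_plus, exp_ln by lra. reflexivity. }
    pose proof (tele_est a m Ha Hm) as T.
    assert (Hg : g n = exp ((2 - a) * ln (m - 1)) /\ g (S n) = exp ((2 - a) * ln m)).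
    { unfold g, m. split; [reflexivity|]. do 3 f_equal. rewrite plus_INR, S_INR, plus_INR. ring. }
    destruct Hg as [-> ->].
    assert (0 < exp (- a * ln m)) by apply exp_pos.
    apply Rle_trans with (2 * m * exp (- a * ln m)). { apply Rmult_le_compat_r; lra. }
    replace (2 * m * exp (- a * ln m)) with (2 * exp ((1 - a) * ln m)) by (rewrite <- E1; ring).
    replace (2 / (a - 2) * (exp ((2 - a) * ln (m - 1)) - exp ((2 - a) * ln m))) with
      (2 * ((exp ((2 - a) * ln (m - 1)) - exp ((2 - a) * ln m)) / (a - 2)))  by (field; lra).
    lra.
  - intros N. rewrite sum_tele. assert (0 < g (S N)) by apply exp_pos.
    assert (0 < a - 2) by lra.
    replace (2 * g 0%nat / (a - 2)) with (2 / (a - 2) * g 0%nat) by (field; lra).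
    assert (0 < 2 / (a - 2)) by (apply Rdiv_lt_0_compat; lra). nra.
  - unfold dirichlet, Cre, Cim. rewrite <- Heq. unfold g in Hl. simpl (INR (0 + n0)) in Hl.
    exact Hl.
Qed.

Lemma geom_partial (K q : R) (N : nat) : 0 <= K -> 0 <= q < 1 ->
  sum_n (fun k => K * q ^ k) N <= K / (1 - q).
Proof.
  intros HK Hq.
  assert (E : sum_n (fun k => K * q ^ k) N * (1 - q) = K * (1 - q ^ (S N))).
  { induction N. rewrite sum_O. simpl. ring.
    rewrite sum_Sn. unfold plus; simpl. simpl in IHN.
    replace ((sum_n (fun k : nat => K * q ^ k) N + K * (q * q ^ N)) * (1 - q)) with
      (sum_n (fun k : nat => K * q ^ k) N * (1 - q) + K * (q * q ^ N) * (1 - q)) by ring.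
    rewrite IHN. ring. }
  assert (0 <= q ^ S N) by (apply pow_le; lra).
  apply (Rmult_le_reg_r (1 - q)); [lra|]. rewrite E.
  unfold Rdiv. rewrite Rmult_assoc, Rinv_l, Rmult_1_r by lra. nra.
Qed.

Theorem lemmaI4 (s beta : C) (n0 k0 : nat) (D : nat -> nat) :
  1 < Cre s ->
  beta <> RtoC 0 ->
  1 + Cmod beta < INR n0 ->
  (0 < k0)%nat ->
  gamma s k0 < (INR n0 - 1) / Cmod beta ->
  (D = x \/ D = y \/ D = z) ->
  exists l : C,
    is_series (fun k => Cmult (Cmult (cbinom (Copp s) (k + k0)) (Cpow_nat beta (k + k0)))
                              (dirichlet D n0 (Cplus s (RtoC (INR (k + k0)))))) l /\
    Cmod l <=
      2 * Cmod beta ^ k0 * Rpower (INR n0 - 1) (3 - Cre s - INR k0)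
      / ((Cre s + INR k0 - 2) * (INR n0 - 1 - gamma s k0 * Cmod beta))
      * Cmod (cbinom (Copp s) k0).
Proof.
  intros Hs Hb Hn0 Hk0 Hg HD.
  assert (Hbp : 0 < Cmod beta) by (apply Cmod_gt_0; exact Hb).
  assert (Hn2 : (2 <= n0)%nat).
  { destruct (le_lt_dec 2 n0) as [h|h]; auto. exfalso.
    assert (INR n0 <= 1) by (replace 1 with (INR 1) by reflexivity; apply le_INR; lia). lra. }
  assert (Hk0r : 1 <= INR k0) by (replace 1 with (INR 1) by reflexivity; apply le_INR; lia).
  set (N := INR n0 - 1) in *. set (sg := Cre s) in *. set (bt := Cmod beta) in *.
  set (gm := gamma s k0) in *. set (b0 := Cmod (cbinom (Copp s) k0)).
  assert (HNd : N = INR n0 - 1) by reflexivity.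
  assert (HN : 0 < N) by lra.
  assert (Hgb : gm * bt < N).
  { apply (Rmult_lt_compat_r bt) in Hg; [|lra]. unfold Rdiv in Hg.
    rewrite Rmult_assoc, Rinv_l, Rmult_1_r in Hg by lra. exact Hg. }
  assert (Hgm0 : 0 <= gm) by apply gamma_ge0.
  assert (Hb00 : 0 <= b0) by apply Cmod_ge_0.
  set (E0 := exp ((2 - sg - INR k0) * ln N)).
  assert (HE0 : 0 < E0) by apply exp_pos.
  set (q := gm * bt / N).
  assert (Hq : 0 <= q < 1).
  { unfold q. split. apply Rdiv_le_0_compat; nra.
    apply (Rmult_lt_reg_r N); [lra|]. unfold Rdiv. rewrite Rmult_assoc, Rinv_l by lra. lra. }
  assert (Hden : 0 < sg + INR k0 - 2) by lra.
  set (K := 2 * b0 * bt ^ k0 * E0 / (sg + INR k0 - 2)).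
  assert (HK : 0 <= K).
  { unfold K. apply Rdiv_le_0_compat; [|lra].
    assert (0 <= bt ^ k0) by (apply pow_le; lra).
    repeat apply Rmult_le_pos; lra. }
  destruct (cseries_bound
    (fun k => Cmult (Cmult (cbinom (Copp s) (k + k0)) (Cpow_nat beta (k + k0)))
                    (dirichlet D n0 (Cplus s (RtoC (INR (k + k0))))))
    (fun k => K * q ^ k) (K / (1 - q))) as [l [Hl [Hlb _]]].
  - intros k. rewrite !Cmod_mult, Cpow_mod.
    assert (Hw : Cre (Cplus s (RtoC (INR (k + k0)))) = sg + INR (k + k0)) by reflexivity.
    assert (Hw2 : 2 < Cre (Cplus s (RtoC (INR (k + k0))))).
    { rewrite Hw, plus_INR. pose proof (pos_INR k). lra. }
    pose proof (dir_bound D n0 _ HD Hn2 Hw2) as Hd. rewrite Hw in Hd. fold N in Hd.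
    set (dk := 2 * E0 * / N ^ k / (sg + INR k0 - 2)).
    assert (Hdk : Cmod (dirichlet D n0 (Cplus s (RtoC (INR (k + k0))))) <= dk).
    { eapply Rle_trans; [exact Hd|]. unfold dk.
      assert (Ee : exp ((2 - (sg + INR (k + k0))) * ln N) = E0 * / N ^ k).
      { rewrite <- (Rpower_pow k N HN). unfold Rpower, E0. rewrite <- exp_Ropp, <- exp_plus.
        f_equal. rewrite plus_INR. ring. }
      rewrite Ee. unfold Rdiv. rewrite <- !Rmult_assoc.
      assert (0 < / N ^ k) by (apply Rinv_0_lt_compat, pow_lt; lra).
      apply Rmult_le_compat_l. nra.
      apply Rinv_le_contravar; [lra|]. rewrite plus_INR. pose proof (pos_INR k). lra. }
    pose proof (binom_bound s k0 k Hs) as Hbb. fold b0 gm in Hbb.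
    apply Rle_trans with (b0 * gm ^ k * bt ^ (k + k0) * dk).
    { apply Rmult_le_compat.
      - apply Rmult_le_pos; [apply Cmod_ge_0| apply pow_le, Cmod_ge_0].
      - apply Cmod_ge_0.
      - apply Rmult_le_compat_r; [apply pow_le; lra|exact Hbb].
      - exact Hdk. }
    right. unfold dk, K, q. rewrite pow_add. unfold Rdiv. rewrite !Rpow_mult_distr, pow_inv.
    field. split; [apply pow_nonzero; lra|lra].
  - intros M. apply geom_partial; auto.
  - exists l. split; [exact Hl|]. eapply Rle_trans; [exact Hlb|]. right.
    assert (Rpower N (3 - sg - INR k0) = E0 * N).
    { unfold Rpower, E0. rewrite <- (exp_ln N) at 3 by lra. rewrite <- exp_plus. f_equal. ring. }
    rewrite H. unfold K, q. field. repeat split; lra.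
Qed.
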